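(* Let $G=\bigl((f_j)_{j=1}^n;(\mu^{R})_{\emptyset\ne R\subseteq[n]}\bigr)$ be an $n$-resource selection game with $f_1,\ldots,f_n$ continuous, and let $S\subseteq[n]$. Then for every $j\in[n]\setminus S$, $h_j(G-S)\ge h_j(G)$.
   Context: An $n$-resource selection game is $G=\bigl((f_j)_{j=1}^n;(\mu^{R})_{\emptyset\ne R\subseteq[n]}\bigr)$ with each $f_j:[0,\infty)\to\mathbb{R}$ nondecreasing and each $\mu^R\ge0$ (games on a general finite resource set are defined analogously). A consumption profile assigns to each nonempty $R$ a vector $s(R)\ge0$ supported on $R$ with total $\mu^R$; loads $\mu^s_j=\sum_R s_j(R)$, costs $h^s_j=f_j(\mu^s_j)$; $s$ is a Nash equilibrium if for every $R$, every $k$ with $s_k(R)>0$ and every $j\in R$, $h^s_k\le h^s_j$. When all $f_j$ are continuous, a Nash equilibrium exists and every Nash equilibrium gives resource $j$ the same cost; $h_j(G)$ denotes this common value. Resource removal: for $S\subsetneq[n]$, $G-S$ is the game with resources $[n]\setminus S$, cost functions $(f_j)_{j\notin S}$, and mass $\sum_{R:\,R\setminus S=R'}\mu^R$ for each nonempty $R'\subseteq[n]\setminus S$ (players who can use only resources in $S$ are removed); $G-\emptyset=G$. *)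

(* Defs.v *)
From mathcomp Require Import all_boot.
From Stdlib Require Import Reals.
Set Implicit Arguments.
Unset Strict Implicit.
Unset Printing Implicit Defensive.

(* Resources are 'I_n.  A game on an active resource set A ⊆ 'I_n is given by
   cost functions f : 'I_n -> R -> R and masses mu : {set 'I_n} -> R,
   where only nonempty subsets X ⊆ A are player types. *)

Definition nondecr_nonneg (g : R -> R) : Prop :=
  forall x y : R, (0 <= x)%R -> (x <= y)%R -> (g x <= g y)%R.

Definition cont_nonneg (g : R -> R) : Prop :=
  forall x : R, (0 <= x)%R -> forall eps : R, (0 < eps)%R ->
    exists delta : R, (0 < delta)%R /\
      forall y : R, (0 <= y)%R -> (Rabs (y - x) < delta)%R ->
        (Rabs (g y - g x) < eps)%R.

Definition ptype (n : nat) (A X : {set 'I_n}) : bool :=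
  (X != set0) && (X \subset A).

Definition is_profile (n : nat) (A : {set 'I_n}) (mu : {set 'I_n} -> R)
    (s : {set 'I_n} -> 'I_n -> R) : Prop :=
  forall X : {set 'I_n}, ptype A X ->
    (forall j, (0 <= s X j)%R) /\
    (forall j, j \notin X -> s X j = 0%R) /\
    \big[Rplus/0%R]_(j : 'I_n) s X j = mu X.

Definition load (n : nat) (A : {set 'I_n}) (s : {set 'I_n} -> 'I_n -> R)
    (j : 'I_n) : R :=
  \big[Rplus/0%R]_(X : {set 'I_n} | ptype A X) s X j.

Definition hcost (n : nat) (A : {set 'I_n}) (f : 'I_n -> R -> R)
    (s : {set 'I_n} -> 'I_n -> R) (j : 'I_n) : R :=
  f j (load A s j).

Definition is_NE (n : nat) (A : {set 'I_n}) (f : 'I_n -> R -> R)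
    (mu : {set 'I_n} -> R) (s : {set 'I_n} -> 'I_n -> R) : Prop :=
  is_profile A mu s /\
  forall (X : {set 'I_n}) (k j : 'I_n), ptype A X ->
    (0 < s X k)%R -> j \in X -> (hcost A f s k <= hcost A f s j)%R.

(* masses of G - S: mass of R' is the sum of mu^R over R with R \ S = R' *)
Definition removed_mass (n : nat) (S : {set 'I_n}) (mu : {set 'I_n} -> R)
    (X : {set 'I_n}) : R :=
  \big[Rplus/0%R]_(Y : {set 'I_n} | (Y != set0) && (Y :\: S == X)) mu Y.

(* Main.v *)
Require Import Defs.
From HB Require Import structures.
From mathcomp Require Import all_boot.
From Stdlib Require Import Reals Lra Classical.
HB.instance Definition _ := Monoid.isComLaw.Build R 0%R Rplus (fun a b c => esym (Rplus_assoc a b c)) Rplus_comm Rplus_0_l.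
Lemma Rsum_le (I : Type) (r : seq I) (P : pred I) (F G : I -> R) :
  (forall i, P i -> (F i <= G i)%R) ->
  (\big[Rplus/0%R]_(i <- r | P i) F i <= \big[Rplus/0%R]_(i <- r | P i) G i)%R.
Proof. move=> H; apply: (big_rec2 (fun a b => (a <= b)%R)); first lra.
move=> i a b Pi Hab; have := H i Pi; lra. Qed.
Lemma Rsum_ge0 (I : Type) (r : seq I) (P : pred I) (F : I -> R) :
  (forall i, P i -> (0 <= F i)%R) -> (0 <= \big[Rplus/0%R]_(i <- r | P i) F i)%R.
Proof. move=> H; apply: (big_ind (fun a => (0 <= a)%R)) => //; first lra.
by move=> x y; lra. Qed.
Check partition_big. Check exchange_big. Check bigID. Check bigD1.

Theorem mainTheorem19 (n : nat) (f : 'I_n -> R -> R) (mu : {set 'I_n} -> R)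
    (S : {set 'I_n}) :
  (forall j, nondecr_nonneg (f j)) ->
  (forall j, cont_nonneg (f j)) ->
  (forall X : {set 'I_n}, X != set0 -> (0 <= mu X)%R) ->
  S != [set: 'I_n] ->
  forall j : 'I_n, j \notin S ->
  forall s s' : {set 'I_n} -> 'I_n -> R,
    is_NE [set: 'I_n] f mu s ->
    is_NE (~: S) f (removed_mass S mu) s' ->
    (hcost [set: 'I_n] f s j <= hcost (~: S) f s' j)%R.
Proof.
move=> Hmon _ Hmu _ j jS s s' [Hp Hne] [Hp' Hne'].
apply: Rnot_lt_le => Hlt.
pose U := [set k | (k \notin S) && (if Rlt_dec (hcost (~: S) f s' k) (hcost [set: 'I_n] f s k) then true else false)].
have inU : forall k, k \in U <-> (k \notin S /\ (hcost (~: S) f s' k < hcost [set: 'I_n] f s k)%R).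
  move=> k; rewrite inE; case: Rlt_dec => H; rewrite ?andbT ?andbF; split => //.
  by case. by case.
have jU : j \in U by apply/inU.
have ld_ge0 : forall k, (0 <= load [set: 'I_n] s k)%R.
  move=> k; apply: Rsum_ge0 => X HX; by case: (Hp X HX).
have ld_lt : forall k, k \in U -> (load (~: S) s' k < load [set: 'I_n] s k)%R.
  move=> k /inU [_ Hk]; apply: Rnot_le_lt => Hle.
  have := Hmon k _ _ (ld_ge0 k) Hle; rewrite /hcost in Hk; lra.
have Hstrict : (\big[Rplus/0%R]_(k in U) load (~: S) s' k < \big[Rplus/0%R]_(k in U) load [set: 'I_n] s k)%R.
  rewrite (bigD1 j) //= [X in (_ < X)%R](bigD1 j) //=.
  apply: Rplus_lt_le_compat; first exact: ld_lt.
  apply: Rsum_le => k /andP [kU _]; exact/Rlt_le/ld_lt.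
apply: (Rlt_not_le _ _ Hstrict).
rewrite /load exchange_big /= [X in (_ <= X)%R]exchange_big /=.
rewrite (bigID (fun Y => Y :\: S != set0)) /=.
rewrite [X in (_ + X)%R]big1; last first.
  move=> Y /andP [HY HYS0]; have HYS : Y :\: S = set0.
  by apply/eqP; apply/negPn.
  apply: big1 => k kU.
  case: (Hp Y HY) => _ [HYo _]; apply: HYo; apply/negP => kY.
  move: kU => /inU [kS _].
  have : k \in Y :\: S by rewrite inE kY kS.
  by rewrite HYS inE.
rewrite Rplus_0_r.
rewrite (partition_big (fun Y => Y :\: S) (ptype (~: S))); last first.
  move=> Y /andP [_ HY]; rewrite /ptype HY /=.
  by apply/subsetP => x; rewrite !inE => /andP [].
apply: Rsum_le => X HX.
have Hsub : forall (F : 'I_n -> R), (forall i, 0 <= F i)%R ->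
    (\big[Rplus/0%R]_(i in U) F i <= \big[Rplus/0%R]_i F i)%R.
  move=> F HF; rewrite [X in (_ <= X)%R](bigID (mem U)) /=.
  have H0 : (0 <= \big[Rplus/0%R]_(i | i \notin U) F i)%R.
    by apply: Rsum_ge0 => i _; exact: HF i.
  rewrite (eq_bigl (fun i => i \in U)) //.
  rewrite -[X in (X <= _)%R]Rplus_0_r; apply: Rplus_le_compat_l; apply: Rsum_ge0 => i _; exact: HF i.
have HXn : X != set0 by case/andP: HX.
case: (classic (exists Y k, [/\ ptype [set: 'I_n] Y, Y :\: S == X, k \in U & (0 < s Y k)%R])) => [[Y0 [k0 [HY0 HY0X k0U Hk0]]] | Hno].
- have claim : forall i, (0 < s' X i)%R -> i \in U.
    move=> i Hi.
    have iX : i \in X.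
      case: (boolP (i \in X)) => // iX; case: (Hp' X HX) => _ [Hz _]; rewrite (Hz i iX) in Hi; lra.
    have k0Y : k0 \in Y0.
      case: (boolP (k0 \in Y0)) => // kY; case: (Hp Y0 HY0) => _ [Hz _]; rewrite (Hz k0 kY) in Hk0; lra.
    move: (k0U) => /inU [k0S Hk0h].
    have k0X : k0 \in X by rewrite -(eqP HY0X) inE k0S k0Y.
    move: (iX); rewrite -(eqP HY0X) inE => /andP [iS iY].
    have H1 := Hne' X i k0 HX Hi k0X.
    have H2 := Hne Y0 k0 i HY0 Hk0 iY.
    apply/inU; split => //; lra.
  have -> : (\big[Rplus/0%R]_(i in U) s' X i = removed_mass S mu X).
    case: (Hp' X HX) => Hnn [_ <-].
    rewrite [X in _ = X](bigID (mem U)) /=.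
    rewrite [X in _ = (_ + X)%R]big1; last first.
      move=> i /= Hi; case: (Rle_lt_or_eq_dec _ _ (Hnn i)) => [H|H].
        by rewrite (claim i H) in Hi.
      by rewrite -H.
    by rewrite Rplus_0_r; apply: eq_bigl.
  rewrite /removed_mass.
  apply: (Rle_trans _ (\big[Rplus/0%R]_(Y | ptype [set: 'I_n] Y && (Y :\: S != set0) && (Y :\: S == X)) mu Y)).
    apply: Rsum_le => Y /andP [/andP [HY _] _]; case: (Hp Y HY) => Hnn [_ <-].
    by apply: Hsub.
  apply: Req_le; apply: eq_bigl => Y.
  apply/idP/idP.
    by case/andP => /andP [/andP [-> _] _] ->.
  case/andP => HY HYX; rewrite /ptype HY subsetT HYX andbT /=.
  by rewrite (eqP HYX).
- rewrite big1; last first.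
    move=> Y /andP [/andP [HY _] HYX]; apply: big1 => k kU.
    case: (Hp Y HY) => Hnn _.
    case: (Rle_lt_or_eq_dec _ _ (Hnn k)) => [H|H]; last by rewrite -H.
    by exfalso; apply: Hno; exists Y, k; split.
  apply: Rsum_ge0 => i _; by case: (Hp' X HX).
Qed.
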